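(* For each integer $n \ge 2$ and real $\gamma$, let $\mathcal{L}_n(\gamma)$ be the infinite graph with vertex set $\mathbb{Z}^+ = \{1,2,3,\ldots\}$ in which the vertices $1,\ldots,n$ form a complete graph $K_n$, the vertices $n, n+1, n+2, \ldots$ form an infinite path (edges $\{k,k+1\}$ for all $k \ge n$), and vertex $1$ carries a self-loop of weight $\gamma$. Let $H$ be its adjacency operator on $\ell^2(\mathbb{Z}^+)$, i.e. the bounded self-adjoint operator with matrix entries (in the standard basis $\{e_j\}_{j\ge1}$) $\langle e_1, He_1\rangle=\gamma$, $\langle e_i, He_j\rangle = 1$ for distinct $i,j\in\{1,\ldots,n\}$, $\langle e_k, He_{k+1}\rangle=\langle e_{k+1}, He_k\rangle=1$ for $k\ge n$, and all other entries $0$. Let $z_1 = n^{-1/2}\sum_{j=1}^{n} e_j$. If $\gamma = n + \mathcal{O}(1)$, then for $t = \pi/(2\sqrt{n})$, \[ \left|\langle e_1, e^{-itH} z_1\rangle\right| = \Omega(1). \]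
   Context: Asymptotic notation refers to $n\to\infty$: $\gamma=\gamma_n$ with $\gamma_n - n$ bounded, and $\Omega(1)$ means bounded below by a positive constant for all sufficiently large $n$. The inner product is $\langle x,y\rangle=\sum_u \overline{x_u}y_u$. *)

(* Defs.v *)
From Stdlib Require Import Reals Arith.
From Coquelicot Require Import Coquelicot.
Open Scope R_scope.

(* Vertices are the positive naturals 1,2,3,...; index 0 is unused (entries 0). *)
Definition adj (n : nat) (g : R) (i j : nat) : R :=
  if (Nat.eqb i 0 || Nat.eqb j 0)%bool then 0
  else if (Nat.eqb i 1 && Nat.eqb j 1)%bool then g
  else if (Nat.leb i n && Nat.leb j n && negb (Nat.eqb i j))%bool then 1
  else if ((Nat.leb n i && Nat.eqb j (S i)) || (Nat.leb n j && Nat.eqb i (S j)))%bool then 1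
  else 0.

(* Action of H on a vector v : nat -> R.  Row i has nonzero entries only in
   columns j <= max n (i+1), so this finite sum is exactly sum_j H_ij v_j. *)
Definition Hop (n : nat) (g : R) (v : nat -> R) : nat -> R :=
  fun i => sum_f_R0 (fun j => adj n g i j * v j) (S (Nat.max n i)).

Definition Hpow (n : nat) (g : R) (k : nat) (v : nat -> R) : nat -> R :=
  Nat.iter k (Hop n g) v.

Definition z1 (n : nat) : nat -> R :=
  fun j => if (Nat.leb 1 j && Nat.leb j n)%bool then / sqrt (INR n) else 0.

(* k-th term of <e_1, e^{-itH} z_1> = sum_k (-it)^k / k! <e_1, H^k z_1>
   (H is real symmetric and bounded, so the exponential is its power series). *)
Definition amp_term (n : nat) (g t : R) (k : nat) : C :=
  Cmult (pow_n (K := C_Ring) (Cmult (RtoC (- t)) Ci) k)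
        (RtoC (Hpow n g k (z1 n) 1%nat / INR (fact k))).

Definition amplitude_is (n : nat) (g t : R) (l : C) : Prop :=
  @is_series C_AbsRing C_NormedModule (amp_term n g t) l.

(* Main.v *)
Require Import Defs.
From Stdlib Require Import Reals Arith Lia Lra Psatz.
From Coquelicot Require Import Coquelicot.
Open Scope R_scope.

Ltac bdes := repeat match goal with
  | |- context [Nat.eqb ?a ?b] => destruct (Nat.eqb_spec a b)
  | |- context [Nat.leb ?a ?b] => destruct (Nat.leb_spec a b)
  end; simpl.

Lemma sum0 (f : nat -> R) N : (forall j, (j <= N)%nat -> f j = 0) -> sum_f_R0 f N = 0.
Proof.
  induction N; intros H; simpl.
  - apply H; lia.
  - rewrite IHN; [rewrite H; [ring|lia]| intros; apply H; lia].
Qed.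

Lemma sum_pt a c N : (a <= N)%nat -> sum_f_R0 (fun j => if Nat.eqb j a then c else 0) N = c.
Proof.
  induction N; intros H; cbn [sum_f_R0].
  - assert (a = 0%nat) by lia; subst; reflexivity.
  - destruct (Nat.eq_dec a (S N)).
    + subst. rewrite sum0. rewrite Nat.eqb_refl. lra.
      intros j Hj; destruct (Nat.eqb_spec j (S N)); [lia|reflexivity].
    + rewrite IHN by lia. destruct (Nat.eqb_spec (S N) a); [lia|ring].
Qed.

Definition Sv (n : nat) (v : nat -> R) := sum_f_R0 (fun j => if Nat.eqb j 0 then 0 else v j) n.

Definition Hc n g (v : nat -> R) i :=
  if Nat.eqb i 0 then 0 else
  if Nat.leb i n then Sv n v - v i + (if Nat.eqb i 1 then g * v 1%nat else 0)
     + (if Nat.eqb i n then v (S n) else 0)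
  else v (pred i) + v (S i).

Lemma Hop_Hc n g v i : (2 <= n)%nat -> Hop n g v i = Hc n g v i.
Proof.
  intros Hn. unfold Hop, Hc.
  destruct (Nat.eqb_spec i 0).
  { subst. apply sum0. intros j _. unfold adj. simpl. ring. }
  destruct (Nat.leb_spec i n).
  - rewrite Nat.max_l by lia. simpl sum_f_R0 at 1.
    rewrite (sum_eq _ (fun j => ((if Nat.eqb j 0 then 0 else v j) -
        (if Nat.eqb j i then v i else 0)) + (if Nat.eqb j 1 then (if Nat.eqb i 1 then g * v 1%nat else 0) else 0))).
    2:{ intros j Hj. unfold adj. bdes; try lia; try ring; subst; try ring. }
    rewrite plus_sum, minus_sum, sum_pt by lia. rewrite sum_pt by lia.
    unfold Sv. unfold adj. bdes; try lia; ring.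
  - rewrite Nat.max_r by lia.
    rewrite (sum_eq _ (fun j => (if Nat.eqb j (pred i) then v (pred i) else 0) +
        (if Nat.eqb j (S i) then v (S i) else 0))).
    2:{ intros j Hj. unfold adj. bdes; try lia; subst; try ring;
        try (replace (pred (S j)) with j by lia; ring). 
        all: try (replace j with (pred i) by lia; ring). }
    rewrite plus_sum, !sum_pt by lia. ring.
Qed.
Lemma sum_abs_bound (f : nat -> R) N m : (forall j, (j <= N)%nat -> Rabs (f j) <= m) ->
  Rabs (sum_f_R0 f N) <= INR (S N) * m.
Proof.
  induction N; intros H; cbn [sum_f_R0].
  - simpl. rewrite Rmult_1_l. apply H; lia.
  - eapply Rle_trans; [apply Rabs_triang|].
    rewrite S_INR. assert (Rabs (f (S N)) <= m) by (apply H; lia).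
    assert (Rabs (sum_f_R0 f N) <= INR (S N) * m) by (apply IHN; intros; apply H; lia).
    lra.
Qed.

Lemma abs4 a b c d : Rabs (a - b + c + d) <= Rabs a + Rabs b + Rabs c + Rabs d.
Proof.
  eapply Rle_trans; [apply Rabs_triang|]. eapply Rle_trans; [apply Rplus_le_compat_r, Rabs_triang|].
  eapply Rle_trans; [apply Rplus_le_compat_r, Rplus_le_compat_r, Rabs_triang|]. rewrite Rabs_Ropp. lra.
Qed.

Definition Mb n g := INR n + Rabs g + 3.

Lemma Hop_bound n g v m : (2 <= n)%nat -> (forall j, Rabs (v j) <= m) ->
  forall i, Rabs (Hop n g v i) <= Mb n g * m.
Proof.
  intros Hn Hv i. assert (Hm : 0 <= m) by (eapply Rle_trans; [apply Rabs_pos| apply (Hv 0%nat)]).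
  assert (Hg : 0 <= Rabs g) by apply Rabs_pos.
  assert (HN : 0 <= INR n) by apply pos_INR.
  assert (HS : Rabs (Sv n v) <= INR (S n) * m).
  { apply sum_abs_bound. intros j _. destruct (Nat.eqb j 0); [rewrite Rabs_R0; lra| apply Hv]. }
  rewrite S_INR in HS.
  rewrite Hop_Hc by lia. unfold Hc, Mb.
  destruct (Nat.eqb i 0). { rewrite Rabs_R0. nra. }
  destruct (Nat.leb i n).
  - assert (H1 : Rabs (if Nat.eqb i 1 then g * v 1%nat else 0) <= Rabs g * m).
    { destruct (Nat.eqb i 1). rewrite Rabs_mult. apply Rmult_le_compat_l; auto. rewrite Rabs_R0; nra. }
    assert (H2 : Rabs (if Nat.eqb i n then v (S n) else 0) <= m).
    { destruct (Nat.eqb i n). auto. rewrite Rabs_R0; nra. }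
    specialize (Hv i).
    eapply Rle_trans; [apply abs4|]. nra.
  - eapply Rle_trans; [apply Rabs_triang|]. pose proof (Hv (pred i)); pose proof (Hv (S i)). nra.
Qed.

Lemma Hpow_S n g k v : Hpow n g (S k) v = Hop n g (Hpow n g k v).
Proof. reflexivity. Qed.

Lemma z1_bound n : (1 <= n)%nat -> forall j, Rabs (z1 n j) <= 1.
Proof.
  intros Hn j. unfold z1. destruct (_ && _)%bool.
  - assert (1 <= INR n) by (apply (le_INR 1); auto).
    assert (1 <= sqrt (INR n)) by (rewrite <- sqrt_1; apply sqrt_le_1_alt; lra).
    rewrite Rabs_pos_eq. apply Rinv_le_contravar in H0; [|lra]. rewrite Rinv_1 in H0; exact H0.
    apply Rlt_le, Rinv_0_lt_compat; lra.
  - rewrite Rabs_R0; lra.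
Qed.

Lemma h_bound n g k : (2 <= n)%nat -> forall j, Rabs (Hpow n g k (z1 n) j) <= Mb n g ^ k.
Proof.
  intros Hn. induction k; intros j.
  - simpl. apply z1_bound; lia.
  - rewrite Hpow_S. simpl pow. apply Hop_bound; auto.
Qed.

Lemma h_supp n g k : (2 <= n)%nat -> forall j, (n + k < j)%nat -> Hpow n g k (z1 n) j = 0.
Proof.
  intros Hn. induction k; intros j Hj.
  - simpl. unfold z1. bdes; try lia; reflexivity.
  - rewrite Hpow_S, Hop_Hc by lia. unfold Hc. bdes; try lia.
    rewrite !IHk by lia. ring.
Qed.

Lemma energy_id n g p q J : (2 <= n)%nat -> (n <= J)%nat ->
  sum_f_R0 (fun j => p j * Hc n g q j - q j * Hc n g p j) J = p J * q (S J) - q J * p (S J).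
Proof.
  intros Hn HJ. induction J.
  - lia.
  - destruct (Nat.eq_dec n (S J)).
    + subst n. rewrite (sum_eq _ (fun j => ((if Nat.eqb j 0 then 0 else p j) * Sv (S J) q -
        (if Nat.eqb j 0 then 0 else q j) * Sv (S J) p) + (if Nat.eqb j (S J) then
        p (S J) * q (S (S J)) - q (S J) * p (S (S J)) else 0))).
      2:{ intros j Hj. unfold Hc. bdes; try lia; subst; try ring. }
      rewrite plus_sum, minus_sum, <- !scal_sum, sum_pt by lia. unfold Sv. ring.
    + cbn [sum_f_R0]. rewrite IHJ by lia. unfold Hc. bdes; try lia.
      replace (pred (S J)) with J by lia. ring.
Qed.

Fixpoint ip (k : nat) : R * R :=
  match k with O => (1, 0) | S k => (- snd (ip k), fst (ip k)) end.
Definition cf k := fst (ip k).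
Definition sf k := snd (ip k).

Lemma cfsf_bound k : Rabs (cf k) <= 1 /\ Rabs (sf k) <= 1.
Proof.
  induction k; unfold cf, sf in *; simpl.
  - rewrite Rabs_R1, Rabs_R0; lra.
  - rewrite Rabs_Ropp; tauto.
Qed.

Lemma cfsf_sign k : cf k * (-1) ^ k = cf k /\ sf k * (-1) ^ k = - sf k.
Proof.
  induction k; unfold cf, sf in *; simpl.
  - split; ring.
  - destruct IHk as [H1 H2]. split.
    + replace (- snd (ip k) * (-1 * (-1) ^ k)) with (snd (ip k) * (-1) ^ k) by ring. rewrite H2; ring.
    + replace (fst (ip k) * (-1 * (-1) ^ k)) with (-(fst (ip k) * (-1) ^ k)) by ring. rewrite H1; ring.
Qed.

Lemma rbar_radius (a : nat -> R) M : 0 <= M -> (forall k, Rabs (a k) <= M ^ k / INR (fact k)) ->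
  forall x, Rbar_lt (Rabs x) (CV_radius a).
Proof.
  intros HM Ha x.
  assert (Hd : CV_disk a (Rabs x + 1)).
  { unfold CV_disk.
    apply (@ex_series_le R_AbsRing R_CompleteNormedModule _ (fun k => / INR (fact k) * (M * (Rabs x + 1)) ^ k)).
    - intros k. change (norm (Rabs (a k * (Rabs x + 1) ^ k))) with (Rabs (Rabs (a k * (Rabs x + 1) ^ k))).
      rewrite Rabs_Rabsolu, Rabs_mult, Rpow_mult_distr.
      rewrite (Rabs_pos_eq ((Rabs x + 1) ^ k)) by (apply pow_le; pose proof (Rabs_pos x); lra).
      specialize (Ha k). assert (0 <= (Rabs x + 1) ^ k) by (apply pow_le; pose proof (Rabs_pos x); lra).
      unfold Rdiv in Ha. nra.
    - eexists. apply is_pseries_R. apply is_exp_Reals. }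
  eapply Rbar_lt_le_trans.
  2:{ apply (proj1 (Lub_Rbar_correct (CV_disk a))). exact Hd. }
  simpl. lra.
Qed.

Section S.
Variables (n : nat) (g : R).
Hypothesis Hn : (2 <= n)%nat.

Definition hh k j := Hpow n g k (z1 n) j.
Definition ax j k := cf k * hh k j / INR (fact k).
Definition ay j k := - sf k * hh k j / INR (fact k).
Definition X j t := PSeries (ax j) t.
Definition Y j t := PSeries (ay j) t.

Lemma Mb_pos : 0 <= Mb n g.
Proof. unfold Mb. pose proof (pos_INR n); pose proof (Rabs_pos g); lra. Qed.

Lemma ax_bound j k : Rabs (ax j k) <= Mb n g ^ k / INR (fact k).
Proof.
  unfold ax, Rdiv. rewrite !Rabs_mult. rewrite (Rabs_pos_eq (/ _)).
  2:{ apply Rlt_le, Rinv_0_lt_compat, INR_fact_lt_0. }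
  apply Rmult_le_compat_r. apply Rlt_le, Rinv_0_lt_compat, INR_fact_lt_0.
  pose proof (cfsf_bound k) as [H1 _]. pose proof (h_bound n g k Hn j).
  pose proof (Rabs_pos (cf k)); pose proof (Rabs_pos (hh k j)). unfold hh in *. nra.
Qed.

Lemma ay_bound j k : Rabs (ay j k) <= Mb n g ^ k / INR (fact k).
Proof.
  unfold ay, Rdiv. rewrite !Rabs_mult. rewrite (Rabs_pos_eq (/ _)).
  2:{ apply Rlt_le, Rinv_0_lt_compat, INR_fact_lt_0. }
  apply Rmult_le_compat_r. apply Rlt_le, Rinv_0_lt_compat, INR_fact_lt_0.
  rewrite Rabs_Ropp.
  pose proof (cfsf_bound k) as [_ H1]. pose proof (h_bound n g k Hn j).
  pose proof (Rabs_pos (sf k)); pose proof (Rabs_pos (hh k j)). unfold hh in *. nra.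
Qed.

Lemma ax_rad j x : Rbar_lt (Rabs x) (CV_radius (ax j)).
Proof. apply (rbar_radius _ (Mb n g) Mb_pos), ax_bound. Qed.
Lemma ay_rad j x : Rbar_lt (Rabs x) (CV_radius (ay j)).
Proof. apply (rbar_radius _ (Mb n g) Mb_pos), ay_bound. Qed.

End S.

Lemma PSeries_lin (a : nat -> nat -> R) (w : nat -> R) x N :
  (forall i, ex_pseries (a i) x) ->
  sum_f_R0 (fun i => w i * PSeries (a i) x) N = PSeries (fun k => sum_f_R0 (fun i => w i * a i k) N) x
  /\ ex_pseries (fun k => sum_f_R0 (fun i => w i * a i k) N) x.
Proof.
  intros Ha. induction N; cbn [sum_f_R0].
  - split.
    + rewrite <- PSeries_scal. apply PSeries_ext. intros k. reflexivity.
    + apply (@ex_pseries_ext R_AbsRing R_NormedModule (PS_scal (w 0%nat) (a 0%nat))).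
      intros k; reflexivity. apply ex_pseries_scal. intros; apply Rmult_comm. apply Ha.
  - destruct IHN as [H1 H2].
    assert (H3 : ex_pseries (fun k => w (S N) * a (S N) k) x).
    { apply (@ex_pseries_ext R_AbsRing R_NormedModule (PS_scal (w (S N)) (a (S N)))).
      intros k; reflexivity. apply ex_pseries_scal. intros; apply Rmult_comm. apply Ha. }
    split.
    + rewrite H1. replace (w (S N) * PSeries (a (S N)) x) with (PSeries (fun k => w (S N) * a (S N) k) x).
      2:{ rewrite <- PSeries_scal. apply PSeries_ext. intros k. reflexivity. }
      rewrite <- PSeries_plus by assumption. apply PSeries_ext. intros k. reflexivity.
    + apply (@ex_pseries_ext R_AbsRing R_NormedModule (PS_plus (fun k => sum_f_R0 (fun i => w i * a i k) N) (fun k => w (S N) * a (S N) k))).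
      intros k; reflexivity. apply ex_pseries_plus; assumption.
Qed.

Section S2.
Variables (n : nat) (g : R).
Hypothesis Hn : (2 <= n)%nat.

Lemma fact_div k : INR (S k) * / INR (fact (S k)) = / INR (fact k).
Proof.
  rewrite fact_simpl, mult_INR. field. split. apply INR_fact_neq_0. apply not_0_INR. lia.
Qed.

Lemma X_deriv j t : is_derive (X n g j) t (Hop n g (fun i => Y n g i t) j).
Proof.
  unfold X. replace (Hop n g (fun i => Y n g i t) j) with (PSeries (PS_derive (ax n g j)) t).
  apply is_derive_PSeries, ax_rad; auto.
  unfold Hop, Y. rewrite (proj1 (PSeries_lin (fun i => ay n g i) _ t _ (fun i => CV_radius_inside _ _ (ay_rad n g Hn i t)))).
  apply PSeries_ext. intros k. unfold PS_derive, ax, ay.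
  rewrite (sum_eq _ (fun i => (adj n g j i * hh n g k i) * (- sf k / INR (fact k)))).
  2:{ intros; unfold Rdiv; ring. }
  rewrite <- scal_sum. unfold hh at 1. rewrite Hpow_S. unfold Hop.
  replace (cf (S k)) with (- sf k) by reflexivity.
  unfold Rdiv. rewrite <- (fact_div k). unfold hh. ring.
Qed.

Lemma Y_deriv j t : is_derive (Y n g j) t (- Hop n g (fun i => X n g i t) j).
Proof.
  unfold Y. replace (- Hop n g (fun i => X n g i t) j) with (PSeries (PS_derive (ay n g j)) t).
  apply is_derive_PSeries, ay_rad; auto.
  unfold Hop, X. rewrite (proj1 (PSeries_lin (fun i => ax n g i) _ t _ (fun i => CV_radius_inside _ _ (ax_rad n g Hn i t)))).
  match goal with |- _ = - ?p => replace (-p) with ((-1)*p) by ring end.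
  rewrite <- PSeries_scal.
  apply PSeries_ext. intros k. unfold PS_derive, PS_scal, ax, ay.
  change (scal (-1) ?u) with ((-1) * u).
  rewrite (sum_eq _ (fun i => (adj n g j i * hh n g k i) * (cf k / INR (fact k)))).
  2:{ intros; unfold Rdiv; ring. }
  rewrite <- scal_sum. unfold hh at 1. rewrite Hpow_S. unfold Hop.
  replace (sf (S k)) with (cf k) by reflexivity.
  unfold Rdiv. rewrite <- (fact_div k). unfold hh. ring.
Qed.

End S2.

Lemma sum_nz b N : sum_f_R0 (fun j => if Nat.eqb j 0 then 0 else b) N = INR N * b.
Proof.
  induction N; cbn [sum_f_R0]. simpl; ring.
  rewrite IHN. rewrite S_INR. simpl. ring.
Qed.

Section S3.
Variables (n : nat) (g : R).
Hypothesis Hn : (2 <= n)%nat.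

Definition sn := sqrt (INR n).
Definition th := INR n - 1.

Definition phr j t := (if Nat.eqb j 1 then - sin (th * t) * sin (sn * t) else 0) +
  (if (Nat.leb 1 j && Nat.leb j n)%bool then cos (th * t) * cos (sn * t) / sn else 0).
Definition phi j t := (if Nat.eqb j 1 then - cos (th * t) * sin (sn * t) else 0) +
  (if (Nat.leb 1 j && Nat.leb j n)%bool then - (sin (th * t) * cos (sn * t) / sn) else 0).
Definition rho j t := (if Nat.eqb j 1 then (g - INR n) * phi 1 t else 0) + (if Nat.eqb j (S n) then phi n t else 0).
Definition sig j t := (if Nat.eqb j 1 then (g - INR n) * phr 1 t else 0) + (if Nat.eqb j (S n) then phr n t else 0).

Lemma Sv_form a b : Sv n (fun i => (if Nat.eqb i 1 then a else 0) + (if (Nat.leb 1 i && Nat.leb i n)%bool then b else 0)) = a + INR n * b.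
Proof.
  unfold Sv. rewrite (sum_eq _ (fun j => (if Nat.eqb j 1 then a else 0) + (if Nat.eqb j 0 then 0 else b))).
  rewrite plus_sum, sum_pt, sum_nz by lia. ring.
  intros j Hj. bdes; try lia; ring.
Qed.

Lemma sn_pos : 0 < sn.
Proof. unfold sn. apply sqrt_lt_R0. apply (lt_INR 0); lia. Qed.
Lemma sn_sq : sn * sn = INR n.
Proof. unfold sn. apply sqrt_sqrt. apply pos_INR. Qed.

Ltac bdes2 := repeat match goal with
  | |- context [Nat.eqb ?a ?b] => destruct (Nat.eqb_spec a b); try (exfalso; lia)
  | |- context [Nat.leb ?a ?b] => destruct (Nat.leb_spec a b); try (exfalso; lia)
  end; cbn beta iota delta [andb Nat.pred].

Lemma Sv_phi t : Sv n (fun i => phi i t) = - cos (th * t) * sin (sn * t) + INR n * (- (sin (th * t) * cos (sn * t) / sn)).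
Proof. unfold phi. apply Sv_form. Qed.
Lemma Sv_phr t : Sv n (fun i => phr i t) = - sin (th * t) * sin (sn * t) + INR n * (cos (th * t) * cos (sn * t) / sn).
Proof. unfold phr. apply Sv_form. Qed.

Ltac fin := auto_derive; auto; unfold th; rewrite <- ?sn_sq; field; pose proof sn_pos; lra.

Lemma phr_deriv j t : is_derive (fun s => phr j s) t (Hc n g (fun i => phi i t) j - rho j t).
Proof.
  unfold Hc. rewrite Sv_phi.
  unfold rho, phr, phi. bdes2; fin.
Qed.

Lemma phi_deriv j t : is_derive (fun s => phi j s) t (- Hc n g (fun i => phr i t) j + sig j t).
Proof.
  unfold Hc. rewrite Sv_phr.
  unfold sig, phr, phi. bdes2; fin.
Qed.
End S3.

Lemma Hc_minus n g v w j : Hc n g v j - Hc n g w j = Hc n g (fun i => v i - w i) j.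
Proof.
  unfold Hc, Sv. rewrite (sum_eq (fun j0 => if Nat.eqb j0 0 then 0 else v j0 - w j0)
     (fun j0 => (if Nat.eqb j0 0 then 0 else v j0) - (if Nat.eqb j0 0 then 0 else w j0))).
  rewrite minus_sum. destruct (Nat.eqb j 0); [ring|]. destruct (Nat.leb j n); [|ring].
  destruct (Nat.eqb j 1), (Nat.eqb j n); ring.
  intros i _. destruct (Nat.eqb i 0); ring.
Qed.

Lemma is_derive_sumf (f : nat -> R -> R) (df : nat -> R) J t :
  (forall j, (j <= J)%nat -> is_derive (f j) t (df j)) ->
  is_derive (fun s => sum_f_R0 (fun j => f j s) J) t (sum_f_R0 df J).
Proof.
  induction J; intros H; cbn [sum_f_R0].
  - apply H; lia.
  - apply (is_derive_plus (fun s => sum_f_R0 (fun j => f j s) J) (f (S J))).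
    apply IHJ; intros; apply H; lia. apply H; lia.
Qed.

Lemma sum_two (f : nat -> R) a b N : (forall j, 0 <= f j) -> a <> b -> (a <= N)%nat -> (b <= N)%nat ->
  f a + f b <= sum_f_R0 f N.
Proof.
  intros Hf Hab Ha Hb.
  rewrite <- (sum_pt a (f a) N Ha), <- (sum_pt b (f b) N Hb), <- plus_sum.
  apply sum_Rle. intros j _. destruct (Nat.eqb_spec j a), (Nat.eqb_spec j b); subst; try lia.
  - pose proof (Hf b); lra.
  - pose proof (Hf a); lra.
  - pose proof (Hf j); lra.
Qed.

Lemma is_derive_eqv (f : R -> R) x l l' : is_derive f x l -> l = l' -> is_derive f x l'.
Proof. intros H <-; exact H. Qed.

Section S4.
Variables (n : nat) (g B : R).
Hypothesis Hn : (2 <= n)%nat.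
Hypothesis HB : Rabs (g - INR n) <= B.

Definition p j t := X n g j t - phr n j t.
Definition q j t := Y n g j t - phi n j t.
Definition E J t := sum_f_R0 (fun j => p j t * p j t + q j t * q j t) J.

Lemma p_deriv j t : is_derive (p j) t (Hc n g (fun i => q i t) j + rho n g j t).
Proof.
  unfold p. eapply is_derive_ext; [intros s; reflexivity|].
  replace (Hc n g (fun i => q i t) j + rho n g j t) with
    (Hop n g (fun i => Y n g i t) j - (Hc n g (fun i => phi n i t) j - rho n g j t)).
  apply (is_derive_minus (X n g j) (fun s => phr n j s)). apply X_deriv; auto. apply phr_deriv; auto.
  rewrite Hop_Hc by auto. unfold q. rewrite <- Hc_minus. ring.
Qed.

Lemma q_deriv j t : is_derive (q j) t (- Hc n g (fun i => p i t) j - sig n g j t).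
Proof.
  unfold q.
  replace (- Hc n g (fun i => p i t) j - sig n g j t) with
    (- Hop n g (fun i => X n g i t) j - (- Hc n g (fun i => phr n i t) j + sig n g j t)).
  apply (is_derive_minus (Y n g j) (fun s => phi n j s)). apply Y_deriv; auto. apply phi_deriv; auto.
  rewrite Hop_Hc by auto. unfold p. rewrite <- Hc_minus. ring.
Qed.

Definition dE J t := sum_f_R0 (fun j => 2 * (p j t * (Hc n g (fun i => q i t) j + rho n g j t))
   + 2 * (q j t * (- Hc n g (fun i => p i t) j - sig n g j t))) J.

Lemma E_deriv J t : is_derive (E J) t (dE J t).
Proof.
  unfold E, dE. apply is_derive_sumf. intros j _.
  pose proof (p_deriv j t) as H1. pose proof (q_deriv j t) as H2.
  pose proof (is_derive_mult _ _ _ _ _ H1 H1 (fun a b => Rmult_comm a b)) as H3.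
  pose proof (is_derive_mult _ _ _ _ _ H2 H2 (fun a b => Rmult_comm a b)) as H4.
  pose proof (is_derive_plus _ _ _ _ _ H3 H4) as H5.
  eapply is_derive_ext; [|eapply is_derive_eqv; [exact H5|]].
  intros s; reflexivity.
  unfold plus, mult; simpl. ring.
Qed.

End S4.

Lemma sn_ge1 n : (1 <= n)%nat -> 1 <= sn n.
Proof.
  intros H. unfold sn. rewrite <- sqrt_1. apply sqrt_le_1_alt. apply (le_INR 1); auto.
Qed.

Lemma div_sn_bound n a : (1 <= n)%nat -> Rabs (a / sn n) <= Rabs a.
Proof.
  intros H. pose proof (sn_ge1 n H). unfold Rdiv. rewrite Rabs_mult, Rabs_inv, (Rabs_pos_eq (sn n)) by lra.
  pose proof (Rabs_pos a). 
  assert (/ sn n <= 1). { rewrite <- Rinv_1. apply Rinv_le_contravar; lra. }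
  assert (0 < / sn n) by (apply Rinv_0_lt_compat; lra). nra.
Qed.


Lemma tt_bound (f1 f2 : R -> R) x y : (forall z, Rabs (f1 z) <= 1) -> (forall z, Rabs (f2 z) <= 1) -> Rabs (f1 x * f2 y) <= 1.
Proof.
  intros H1 H2. rewrite Rabs_mult. pose proof (H1 x); pose proof (H2 y).
  pose proof (Rabs_pos (f1 x)); pose proof (Rabs_pos (f2 y)). nra.
Qed.

Lemma sin_b z : Rabs (sin z) <= 1. Proof. apply Rabs_le, SIN_bound. Qed.
Lemma cos_b z : Rabs (cos z) <= 1. Proof. apply Rabs_le, COS_bound. Qed.

Lemma phr_bound n j t : (1 <= n)%nat -> Rabs (phr n j t) <= 2.
Proof.
  intros Hn. unfold phr. eapply Rle_trans; [apply Rabs_triang|].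
  assert (Rabs (if Nat.eqb j 1 then - sin (th n * t) * sin (sn n * t) else 0) <= 1).
  { destruct (Nat.eqb j 1). rewrite Ropp_mult_distr_l_reverse, Rabs_Ropp. apply tt_bound; [apply sin_b|apply sin_b].
    rewrite Rabs_R0; lra. }
  assert (Rabs (if (Nat.leb 1 j && Nat.leb j n)%bool then cos (th n * t) * cos (sn n * t) / sn n else 0) <= 1).
  { destruct (_ && _)%bool. eapply Rle_trans; [apply div_sn_bound; auto|]. apply tt_bound; apply cos_b.
    rewrite Rabs_R0; lra. }
  lra.
Qed.

Lemma phi_bound n j t : (1 <= n)%nat -> Rabs (phi n j t) <= 2.
Proof.
  intros Hn. unfold phi. eapply Rle_trans; [apply Rabs_triang|].
  assert (Rabs (if Nat.eqb j 1 then - cos (th n * t) * sin (sn n * t) else 0) <= 1).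
  { destruct (Nat.eqb j 1). rewrite Ropp_mult_distr_l_reverse, Rabs_Ropp. apply tt_bound; [apply cos_b|apply sin_b].
    rewrite Rabs_R0; lra. }
  assert (Rabs (if (Nat.leb 1 j && Nat.leb j n)%bool then - (sin (th n * t) * cos (sn n * t) / sn n) else 0) <= 1).
  { destruct (_ && _)%bool. rewrite Rabs_Ropp. eapply Rle_trans; [apply div_sn_bound; auto|]. apply tt_bound; [apply sin_b|apply cos_b].
    rewrite Rabs_R0; lra. }
  lra.
Qed.

Lemma ab2 a b : 2 * (a * b) <= a * a + b * b.
Proof. pose proof (Rle_0_sqr (a - b)). unfold Rsqr in *. lra. Qed.
Lemma ab2' a b : - (2 * (a * b)) <= a * a + b * b.
Proof. pose proof (Rle_0_sqr (a + b)). unfold Rsqr in *. lra. Qed.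

Section S5.
Variables (n : nat) (g B : R).
Hypothesis Hn : (2 <= n)%nat.
Hypothesis HB : Rabs (g - INR n) <= B.

Lemma sq_le a b : Rabs a <= b -> a * a <= b * b.
Proof.
  intros H. pose proof (Rabs_pos a).
  replace (a * a) with (Rabs a * Rabs a). nra.
  rewrite <- Rabs_mult. apply Rabs_pos_eq. apply Rle_0_sqr.
Qed.


Lemma dE_split J t : (S n <= J)%nat ->
  dE n g J t = 2 * (p n g J t * q n g (S J) t - q n g J t * p n g (S J) t) +
    2 * (p n g 1 t * rho n g 1 t - q n g 1 t * sig n g 1 t + p n g (S n) t * rho n g (S n) t - q n g (S n) t * sig n g (S n) t).
Proof.
  intros HJ. unfold dE.
  rewrite (sum_eq _ (fun j => (p n g j t * Hc n g (fun i => q n g i t) j - q n g j t * Hc n g (fun i => p n g i t) j) * 2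
     + (p n g j t * rho n g j t - q n g j t * sig n g j t) * 2)) by (intros; ring).
  rewrite plus_sum, <- !scal_sum, energy_id by lia.
  rewrite (sum_eq _ (fun j => (if Nat.eqb j 1 then p n g 1 t * rho n g 1 t - q n g 1 t * sig n g 1 t else 0)
     + (if Nat.eqb j (S n) then p n g (S n) t * rho n g (S n) t - q n g (S n) t * sig n g (S n) t else 0))).
  rewrite plus_sum, !sum_pt by lia. ring.
  intros j _. unfold rho, sig. destruct (Nat.eqb_spec j 1), (Nat.eqb_spec j (S n)); subst; try lia.
  - replace (Nat.eqb 1 (S n)) with false by (symmetry; apply Nat.eqb_neq; lia). simpl. ring.
  - replace (Nat.eqb (S n) 1) with false by (symmetry; apply Nat.eqb_neq; lia). rewrite Nat.eqb_refl. ring.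
  - ring.
Qed.

Lemma dE_bound J t : (S n <= J)%nat ->
  dE n g J t <= E n g J t + (8 * (B * B) + 8) + 2 * Rabs (p n g J t * q n g (S J) t - q n g J t * p n g (S J) t).
Proof.
  intros HJ. rewrite dE_split by auto.
  assert (HE : (p n g 1 t * p n g 1 t + q n g 1 t * q n g 1 t) + (p n g (S n) t * p n g (S n) t + q n g (S n) t * q n g (S n) t) <= E n g J t).
  { apply (sum_two (fun j => p n g j t * p n g j t + q n g j t * q n g j t)); try lia.
    intros j. pose proof (Rle_0_sqr (p n g j t)); pose proof (Rle_0_sqr (q n g j t)). unfold Rsqr in *. lra. }
  assert (HB0 : 0 <= B) by (eapply Rle_trans; [apply Rabs_pos|exact HB]).
  assert (H1 : rho n g 1 t * rho n g 1 t <= 4 * (B * B)).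
  { unfold rho. replace (Nat.eqb 1 (S n)) with false by (symmetry; apply Nat.eqb_neq; lia). rewrite Nat.eqb_refl, Rplus_0_r.
    pose proof (sq_le _ _ HB). pose proof (sq_le _ _ (phi_bound n 1 t ltac:(lia))).
    assert (0 <= (g - INR n) * (g - INR n)) by apply Rle_0_sqr.
    assert (0 <= phi n 1 t * phi n 1 t) by apply Rle_0_sqr. nra. }
  assert (H2 : sig n g 1 t * sig n g 1 t <= 4 * (B * B)).
  { unfold sig. replace (Nat.eqb 1 (S n)) with false by (symmetry; apply Nat.eqb_neq; lia). rewrite Nat.eqb_refl, Rplus_0_r.
    pose proof (sq_le _ _ HB). pose proof (sq_le _ _ (phr_bound n 1 t ltac:(lia))).
    assert (0 <= (g - INR n) * (g - INR n)) by apply Rle_0_sqr.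
    assert (0 <= phr n 1 t * phr n 1 t) by apply Rle_0_sqr. nra. }
  assert (H3 : rho n g (S n) t * rho n g (S n) t <= 4).
  { unfold rho. replace (Nat.eqb (S n) 1) with false by (symmetry; apply Nat.eqb_neq; lia). rewrite Nat.eqb_refl, Rplus_0_l.
    pose proof (sq_le _ _ (phi_bound n n t ltac:(lia))). lra. }
  assert (H4 : sig n g (S n) t * sig n g (S n) t <= 4).
  { unfold sig. replace (Nat.eqb (S n) 1) with false by (symmetry; apply Nat.eqb_neq; lia). rewrite Nat.eqb_refl, Rplus_0_l.
    pose proof (sq_le _ _ (phr_bound n n t ltac:(lia))). lra. }
  pose proof (Rle_abs (p n g J t * q n g (S J) t - q n g J t * p n g (S J) t)).
  pose proof (ab2 (p n g 1 t) (rho n g 1 t)). pose proof (ab2' (q n g 1 t) (sig n g 1 t)).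
  pose proof (ab2 (p n g (S n) t) (rho n g (S n) t)). pose proof (ab2' (q n g (S n) t) (sig n g (S n) t)).
  lra.
Qed.

End S5.

Lemma exp_series x : is_series (fun k => / INR (fact k) * x ^ k) (exp x).
Proof. apply is_pseries_R, is_exp_Reals. Qed.

Lemma tail_bound (a : nat -> R) M K x : 0 <= M -> Rabs x <= 1 ->
  (forall k, Rabs (a k) <= (if Nat.leb K k then M ^ k else 0) / INR (fact k)) ->
  Rabs (PSeries a x) <= exp (2 * M) / 2 ^ K.
Proof.
  intros HM Hx Ha.
  set (b := fun k => / 2 ^ K * (/ INR (fact k) * (2 * M) ^ k)).
  assert (Hb : ex_series b).
  { exists (/ 2 ^ K * exp (2 * M)). unfold b. apply (@is_series_scal_l R_AbsRing R_NormedModule). apply exp_series. }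
  assert (Hab : forall k, 0 <= Rabs (a k * x ^ k) <= b k).
  { intros k. split. apply Rabs_pos. unfold b. rewrite Rabs_mult, <- RPow_abs.
    assert (H1 : Rabs x ^ k <= 1). { rewrite <- (pow1 k). apply pow_incr. split; [apply Rabs_pos|auto]. }
    assert (H0 : 0 <= Rabs x ^ k) by (apply pow_le, Rabs_pos).
    assert (Hf : 0 < / INR (fact k)) by (apply Rinv_0_lt_compat, INR_fact_lt_0).
    assert (H2 : (if Nat.leb K k then M ^ k else 0) <= / 2 ^ K * (2 * M) ^ k).
    { destruct (Nat.leb_spec K k).
      - rewrite Rpow_mult_distr. assert (2 ^ K <= 2 ^ k) by (apply Rle_pow; lra || lia).
        assert (0 < 2 ^ K) by (apply pow_lt; lra). assert (0 <= M ^ k) by (apply pow_le; auto).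
        apply (Rmult_le_reg_l (2 ^ K)); auto. rewrite <- Rmult_assoc, Rinv_r by lra. nra.
      - apply Rmult_le_pos. apply Rlt_le, Rinv_0_lt_compat, pow_lt; lra. apply pow_le; lra. }
    specialize (Ha k). unfold Rdiv in Ha.
    assert (0 <= Rabs (a k)) by apply Rabs_pos.
    assert (Rabs (a k) * Rabs x ^ k <= Rabs (a k)) by nra.
    assert (0 <= / 2 ^ K) by (apply Rlt_le, Rinv_0_lt_compat, pow_lt; lra).
    nra. }
  unfold PSeries. eapply Rle_trans. apply Series_Rabs.
  apply (@ex_series_le R_AbsRing R_CompleteNormedModule _ b); auto.
  intros k. change (norm (Rabs (a k * x ^ k))) with (Rabs (Rabs (a k * x ^ k))). rewrite Rabs_Rabsolu. apply Hab.
  eapply Rle_trans. apply Series_le; auto.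
  unfold b. rewrite Series_scal_l. rewrite (is_series_unique _ _ (exp_series (2 * M))). unfold Rdiv. lra.
Qed.

Section S6.
Variables (n : nat) (g : R).
Hypothesis Hn : (2 <= n)%nat.

Lemma hh_tail K k : Rabs (hh n g k (n + K)) <= (if Nat.leb K k then Mb n g ^ k else 0).
Proof.
  destruct (Nat.leb_spec K k). apply h_bound; auto.
  unfold hh. rewrite h_supp by lia. rewrite Rabs_R0; lra.
Qed.

Lemma X_tail K x : Rabs x <= 1 -> Rabs (X n g (n + K) x) <= exp (2 * Mb n g) / 2 ^ K.
Proof.
  intros Hx. apply tail_bound; auto. apply Mb_pos.
  intros k. unfold ax, Rdiv. rewrite !Rabs_mult.
  rewrite (Rabs_pos_eq (/ _)) by (apply Rlt_le, Rinv_0_lt_compat, INR_fact_lt_0).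
  apply Rmult_le_compat_r. apply Rlt_le, Rinv_0_lt_compat, INR_fact_lt_0.
  pose proof (cfsf_bound k) as [H1 _]. pose proof (hh_tail K k).
  pose proof (Rabs_pos (cf k)); pose proof (Rabs_pos (hh n g k (n + K))).
  assert (0 <= Rabs (hh n g k (n + K))) by apply Rabs_pos. nra.
Qed.

Lemma Y_tail K x : Rabs x <= 1 -> Rabs (Y n g (n + K) x) <= exp (2 * Mb n g) / 2 ^ K.
Proof.
  intros Hx. apply tail_bound; auto. apply Mb_pos.
  intros k. unfold ay, Rdiv. rewrite !Rabs_mult, Rabs_Ropp.
  rewrite (Rabs_pos_eq (/ _)) by (apply Rlt_le, Rinv_0_lt_compat, INR_fact_lt_0).
  apply Rmult_le_compat_r. apply Rlt_le, Rinv_0_lt_compat, INR_fact_lt_0.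
  pose proof (cfsf_bound k) as [_ H1]. pose proof (hh_tail K k).
  pose proof (Rabs_pos (sf k)); pose proof (Rabs_pos (hh n g k (n + K))). nra.
Qed.

End S6.

Lemma INR_le_pow2 K : INR K <= 2 ^ K.
Proof.
  induction K. simpl; lra. rewrite S_INR. simpl.
  assert (1 <= 2 ^ K) by (apply pow_R1_Rle; lra). lra.
Qed.

Lemma pow2_large X : exists K, (1 <= K)%nat /\ X <= 2 ^ K.
Proof.
  destruct (INR_unbounded X) as [K HK]. exists (S K). split. lia.
  pose proof (INR_le_pow2 (S K)). rewrite S_INR in H. pose proof (INR_le_pow2 K).
  simpl. assert (1 <= 2 ^ K) by (apply pow_R1_Rle; lra). lra.
Qed.

Section S7.
Variables (n : nat) (g B : R).
Hypothesis Hn : (2 <= n)%nat.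
Hypothesis HB : Rabs (g - INR n) <= B.

Lemma phr_out j t : (n < j)%nat -> phr n j t = 0.
Proof. intros H. unfold phr. bdes; try lia; ring. Qed.
Lemma phi_out j t : (n < j)%nat -> phi n j t = 0.
Proof. intros H. unfold phi. bdes; try lia; ring. Qed.

Lemma E0 J : E n g J 0 = 0.
Proof.
  unfold E. apply sum0. intros j _. unfold p, q, X, Y. rewrite !PSeries_0.
  unfold ax, ay, hh. simpl Hpow. unfold cf, sf. simpl.
  unfold phr, phi, z1. rewrite !Rmult_0_r, sin_0, cos_0. unfold sn.
  bdes; try lia; field; apply Rgt_not_eq, sqrt_lt_R0, (lt_INR 0); lia.
Qed.

Lemma boundary_small K t : (1 <= K)%nat -> 2 * exp (2 * Mb n g) <= 2 ^ K -> Rabs t <= 1 ->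
  2 * Rabs (p n g (n + K) t * q n g (S (n + K)) t - q n g (n + K) t * p n g (S (n + K)) t) <= 1.
Proof.
  intros HK H2 Ht.
  unfold p, q. rewrite !phr_out, !phi_out by lia. rewrite !Rminus_0_r.
  replace (S (n + K)) with (n + S K)%nat by lia.
  set (T := exp (2 * Mb n g) / 2 ^ K).
  assert (HT : T <= 1/2).
  { unfold T. assert (0 < 2 ^ K) by (apply pow_lt; lra). apply (Rmult_le_reg_r (2 ^ K)); auto.
    unfold Rdiv. rewrite Rmult_assoc, Rinv_l by lra. lra. }
  assert (HT' : exp (2 * Mb n g) / 2 ^ S K <= T).
  { unfold T. simpl. assert (0 < 2 ^ K) by (apply pow_lt; lra). pose proof (exp_pos (2 * Mb n g)).
    unfold Rdiv. rewrite Rinv_mult. assert (0 < / 2 ^ K) by (apply Rinv_0_lt_compat; lra). nra. }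
  pose proof (X_tail n g Hn K t Ht). pose proof (Y_tail n g Hn K t Ht).
  pose proof (X_tail n g Hn (S K) t Ht). pose proof (Y_tail n g Hn (S K) t Ht).
  fold T in H, H0.
  set (a := X n g (n + K) t) in *. set (b := Y n g (n + S K) t) in *.
  set (c := Y n g (n + K) t) in *. set (d := X n g (n + S K) t) in *.
  assert (Rabs (a * b - c * d) <= Rabs a * Rabs b + Rabs c * Rabs d).
  { unfold Rminus. eapply Rle_trans. apply Rabs_triang. rewrite Rabs_Ropp, !Rabs_mult. lra. }
  pose proof (Rabs_pos a). pose proof (Rabs_pos b). pose proof (Rabs_pos c). pose proof (Rabs_pos d).
  assert (Rabs a * Rabs b <= T * T). { apply Rmult_le_compat; lra. }
  assert (Rabs c * Rabs d <= T * T). { apply Rmult_le_compat; lra. }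
  assert (0 <= T) by (eapply Rle_trans; [apply (Rabs_pos a)|lra]).
  nra.
Qed.

End S7.

Section S8.
Variables (n : nat) (g B : R).
Hypothesis Hn : (2 <= n)%nat.
Hypothesis HB : Rabs (g - INR n) <= B.

Lemma main_est t : 0 <= t <= 1 ->
  p n g 1 t * p n g 1 t + q n g 1 t * q n g 1 t <= 3 * t * (8 * (B * B) + 9).
Proof.
  intros Ht.
  destruct (pow2_large (2 * exp (2 * Mb n g))) as [K [HK1 HK2]].
  set (J := (n + K)%nat). set (C := 8 * (B * B) + 9).
  assert (HB0 : 0 <= B) by (eapply Rle_trans; [apply Rabs_pos|exact HB]).
  assert (HC : 0 <= C) by (unfold C; nra).
  set (F := fun s => exp (- s) * E n g J s - s * C).
  set (dF := fun s => - exp (- s) * E n g J s + exp (- s) * dE n g J s - C).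
  assert (HF : forall s, is_derive F s (dF s)).
  { intros s. unfold F, dF.
    assert (H1 : is_derive (fun s => exp (- s)) s (- exp (- s))) by (auto_derive; auto; ring).
    assert (H2 : is_derive (fun s => s * C) s C) by (auto_derive; auto; ring).
    pose proof (is_derive_mult _ _ _ _ _ H1 (E_deriv n g Hn J s) (fun a b => Rmult_comm a b)) as H3.
    pose proof (is_derive_minus _ _ _ _ _ H3 H2) as H4.
    eapply is_derive_ext; [|eapply is_derive_eqv; [exact H4|]].
    intros u; reflexivity. unfold plus, mult, minus, plus, opp; simpl. ring. }
  destruct (MVT_gen F 0 t dF) as [c [Hc1 Hc2]].
  { intros x _. apply HF. }
  { intros x _. apply continuity_pt_filterlim. apply (@ex_derive_continuous R_AbsRing R_NormedModule). eexists. apply HF. }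
  rewrite Rmin_left in Hc1 by lra. rewrite Rmax_right in Hc1 by lra.
  assert (HdF : dF c <= 0).
  { unfold dF. pose proof (dE_bound n g B Hn HB J c ltac:(unfold J; lia)).
    pose proof (boundary_small n g Hn K c HK1 HK2 ltac:(rewrite Rabs_pos_eq; lra)).
    fold J in H0.
    assert (0 < exp (- c)) by apply exp_pos.
    assert (exp (- c) <= 1) by (rewrite <- exp_0; destruct (Req_dec c 0); [subst; rewrite Ropp_0; lra| left; apply exp_increasing; lra]).
    assert (dE n g J c - E n g J c <= C) by (unfold C in *; lra).
    nra. }
  unfold F in Hc2. rewrite E0, Ropp_0, exp_0 in Hc2.
  assert (HEt : exp (- t) * E n g J t <= t * C) by nra.
  assert (HE : E n g J t <= exp t * (t * C)).
  { rewrite exp_Ropp in HEt. pose proof (exp_pos t).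
    apply (Rmult_le_reg_l (/ exp t)). apply Rinv_0_lt_compat; auto.
    rewrite <- Rmult_assoc, Rinv_l by lra. lra. }
  assert (Hexp : exp t <= 3).
  { eapply Rle_trans; [|apply exp_le_3]. destruct (Req_dec t 1). subst; lra. left; apply exp_increasing; lra. }
  assert (HS : (p n g 1 t * p n g 1 t + q n g 1 t * q n g 1 t) + (p n g (S n) t * p n g (S n) t + q n g (S n) t * q n g (S n) t) <= E n g J t).
  { apply (sum_two (fun j => p n g j t * p n g j t + q n g j t * q n g j t)); try (unfold J; lia).
    intros j. pose proof (Rle_0_sqr (p n g j t)); pose proof (Rle_0_sqr (q n g j t)). unfold Rsqr in *. lra. }
  pose proof (Rle_0_sqr (p n g (S n) t)); pose proof (Rle_0_sqr (q n g (S n) t)). unfold Rsqr in *.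
  assert (0 <= t * C) by nra.
  assert (exp t * (t * C) <= 3 * (t * C)) by nra.
  fold C. lra.
  all: lia.
Qed.

End S8.

Lemma pow_Ci t k : pow_n (K := C_Ring) (Cmult (RtoC (- t)) Ci) k = ((-t) ^ k * cf k, (-t) ^ k * sf k).
Proof.
  induction k.
  - simpl. unfold cf, sf. simpl. apply injective_projections; simpl; ring.
  - simpl pow_n. rewrite IHk. unfold mult; simpl. unfold Cmult, RtoC, Ci; simpl.
    unfold cf, sf; simpl. f_equal; ring.
Qed.

Lemma amp_eq n g t k : amp_term n g t k = (ax n g 1 k * t ^ k, ay n g 1 k * t ^ k).
Proof.
  unfold amp_term. rewrite pow_Ci. unfold Cmult, RtoC; simpl.
  replace (- t) with (-1 * t) by ring. rewrite Rpow_mult_distr.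
  destruct (cfsf_sign k) as [H1 H2].
  unfold ax, ay, hh. f_equal.
  - replace ((-1) ^ k * t ^ k * cf k) with ((cf k * (-1) ^ k) * t ^ k) by ring. rewrite H1. unfold Rdiv. ring.
  - replace ((-1) ^ k * t ^ k * sf k) with ((sf k * (-1) ^ k) * t ^ k) by ring. rewrite H2. unfold Rdiv. ring.
Qed.

Lemma sum_n_pair (a b : nat -> R) N :
  sum_n (G := C_AbelianMonoid) (fun k => (a k, b k)) N = (sum_n a N, sum_n b N).
Proof.
  induction N.
  - rewrite !sum_O. reflexivity.
  - rewrite !sum_Sn, IHN. reflexivity.
Qed.

Lemma is_series_C (a b : nat -> R) la lb :
  is_series a la -> is_series b lb ->
  is_series (K := C_AbsRing) (V := C_NormedModule) (fun k => (a k, b k)) (la, lb).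
Proof.
  intros Ha Hb. unfold is_series in *.
  apply (filterlim_ext (fun N => (sum_n a N, sum_n b N))).
  { intros N. rewrite sum_n_pair. reflexivity. }
  apply (proj2 (filterlim_locally (U := C_UniformSpace) (fun N => (sum_n a N, sum_n b N)) ((la, lb) : C))). intros eps.
  pose proof (proj1 (filterlim_locally _ _) Ha eps) as Ha'.
  pose proof (proj1 (filterlim_locally _ _) Hb eps) as Hb'. clear Ha Hb. rename Ha' into Ha. rename Hb' into Hb.
  generalize (filter_and _ _ Ha Hb). apply filter_imp. intros N [H1 H2]. split; assumption.
Qed.

Theorem theorem1 :
  forall gamma : nat -> R,
    (exists B : R, forall n : nat, Rabs (gamma n - INR n) <= B) ->
    exists c : R, 0 < c /\
    exists N : nat, forall n : nat, (2 <= n)%nat -> (N <= n)%nat ->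
      exists l : C,
        amplitude_is n (gamma n) (PI / (2 * sqrt (INR n))) l /\ c <= Cmod l.
Proof.
  intros gamma [B HB]. exists (1/2). split. lra.
  set (C0 := 8 * (B * B) + 9).
  destruct (INR_unbounded ((24 * C0) * (24 * C0) + 4)) as [N HN].
  exists N. intros n Hn2 HNn.
  set (g := gamma n). set (t := PI / (2 * sqrt (INR n))).
  assert (HBn : Rabs (g - INR n) <= B) by apply HB.
  assert (HB0 : 0 <= B) by (eapply Rle_trans; [apply Rabs_pos|exact HBn]).
  assert (HC0 : 9 <= C0) by (unfold C0; nra).
  assert (HnN : INR N <= INR n) by (apply le_INR; auto).
  assert (Hsn : sn n = sqrt (INR n)) by reflexivity.
  assert (Hsq : 24 * C0 <= sn n).
  { rewrite Hsn. rewrite <- (sqrt_square (24 * C0)) by lra. apply sqrt_le_1_alt. lra. }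
  assert (Hsnp : 0 < sn n) by lra.
  assert (HPI : 0 < PI <= 4) by (split; [apply PI_RGT_0|apply PI_4]).
  assert (Ht : t = PI / (2 * sn n)) by reflexivity.
  assert (Ht0 : 0 <= t <= 1).
  { rewrite Ht. split. unfold Rdiv. apply Rmult_le_pos. lra. apply Rlt_le, Rinv_0_lt_compat; lra.
    apply (Rmult_le_reg_r (2 * sn n)). lra. unfold Rdiv. rewrite Rmult_assoc, Rinv_l by lra. lra. }
  assert (Ht2 : t * sn n <= 2).
  { rewrite Ht. unfold Rdiv. rewrite Rmult_assoc, Rinv_mult, (Rmult_assoc (/ 2)), Rinv_l by lra. lra. }
  exists (X n g 1 t, Y n g 1 t). split.
  - unfold amplitude_is. apply (is_series_ext (fun k => (ax n g 1 k * t ^ k, ay n g 1 k * t ^ k))).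
    { intros k; symmetry; apply amp_eq. }
    apply is_series_C; apply is_pseries_R; apply PSeries_correct, CV_radius_inside.
    apply ax_rad; auto. apply ay_rad; auto.
  - pose proof (main_est n g B Hn2 HBn t Ht0) as Hm. fold C0 in Hm.
    assert (Hw : p n g 1 t * p n g 1 t + q n g 1 t * q n g 1 t <= 1/4).
    { assert (3 * t * C0 <= 1/4).
      { assert (t * (24 * C0) <= t * sn n) by (apply Rmult_le_compat_l; lra). nra. }
      lra. }
    set (w := (p n g 1 t, q n g 1 t) : C).
    assert (HCw : Cmod w <= 1/2).
    { assert (0 <= Cmod w) by apply Cmod_ge_0.
      assert (Cmod w * Cmod w <= 1/4).
      { unfold Cmod, w. simpl. rewrite sqrt_sqrt. lra. nra. }
      nra. }
    assert (Hphi : Cmod (phr n 1 t, phi n 1 t) = 1).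
    { assert (Hst : sn n * t = PI / 2) by (rewrite Ht; field; lra).
      unfold phr, phi. rewrite Nat.eqb_refl.
      replace ((Nat.leb 1 1 && Nat.leb 1 n)%bool) with true by (destruct (Nat.leb_spec 1 1), (Nat.leb_spec 1 n); try lia; reflexivity).
      rewrite Hst, sin_PI2, cos_PI2.
      unfold Cmod. simpl. match goal with |- sqrt ?e = 1 => replace e with 1 end. apply sqrt_1.
      transitivity (Rsqr (sin (th n * t)) + Rsqr (cos (th n * t))). symmetry; apply sin2_cos2. unfold Rsqr. field. lra. }
    assert (Hl : Cplus (X n g 1 t, Y n g 1 t) (Copp w) = (phr n 1 t, phi n 1 t)).
    { unfold w, p, q, Cplus, Copp; simpl. f_equal; ring. }
    pose proof (Cmod_triangle (X n g 1 t, Y n g 1 t) (Copp w)). rewrite Hl, Hphi, Cmod_opp in H.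
    lra.
Qed.
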